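(* Let $n$ be a positive integer, $p\ge5$ a prime number, $I$ an infinite set, and $R=\prod_{i\in I}\mathbb Z/np^2\mathbb Z$. There exists a $2\times3$ matrix with entries in $R$ that is partition regular over $R$ but does not satisfy the generalised columns condition.
   Context: A $k\times l$ matrix $\mathbf A$ over $R$ is partition regular over $R$ if for every $r\ge1$ and every map $\chi\colon R\to\{1,\dots,r\}$ there is a nonzero $\mathbf x\in R^l$ with $\mathbf A\mathbf x=0$ and all entries of $\mathbf x$ of the same colour. With columns $\mathbf c_1,\dots,\mathbf c_l$, $\mathbf A$ satisfies the generalised columns condition if there exist $m\ge0$, a partition $\{1,\dots,l\}=I_0\cup\dots\cup I_m$ and $d_0,\dots,d_m\in R\setminus\{0\}$ with (i) $d_0\sum_{i\in I_0}\mathbf c_i=0$; (ii) for $1\le t\le m$, $d_t\sum_{i\in I_t}\mathbf c_i$ lies in the $R$-submodule generated by the $\mathbf c_j$ with $j\in I_0\cup\dots\cup I_{t-1}$; (iii) if $m>0$, the ideal $d_0(d_1\cdots d_m)^nR$ is infinite for every $n\ge0$. *)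

(* Defs.v *)
From HB Require Import structures.
From mathcomp Require Import all_boot all_order all_algebra.
From mathcomp Require Import boolp classical_sets functions cardinality.
Set Implicit Arguments. Unset Strict Implicit. Unset Printing Implicit Defensive.
Import Order.TTheory GRing.Theory.
Local Open Scope ring_scope.
Local Open Scope classical_set_scope.

Definition partition_regular (R : comPzRingType) (k l : nat) (A : 'M[R]_(k, l)) :=
  forall (r : nat), (1 <= r)%N -> forall chi : R -> 'I_r,
    exists x : 'cV[R]_l,
      [/\ x != 0, A *m x = 0 & forall i j : 'I_l, chi (x i 0) = chi (x j 0)].

(* The partition {1..l} = I_0 u ... u I_m is
   encoded by a surjective block assignment f : 'I_l -> 'I_(m+1)
   (I_t = f^-1(t)); the constants d_0..d_m are d : 'I_(m+1) -> R. *)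
Definition gen_columns_condition (R : comPzRingType) (k l : nat) (A : 'M[R]_(k, l)) :=
  exists (m : nat) (f : 'I_l -> 'I_m.+1) (d : 'I_m.+1 -> R),
    [/\ (forall t, exists i, f i = t),
        (forall t, d t != 0),
        d ord0 *: (\sum_(i | f i == ord0) col i A) = 0,
        (forall t : 'I_m.+1, (0 < t)%N ->
           exists a : 'I_l -> R,
             d t *: (\sum_(i | f i == t) col i A)
             = \sum_(j | (f j < t)%N) a j *: col j A)
      & ((0 < m)%N -> forall e : nat,
           infinite_set [set d ord0 * (\prod_(t : 'I_m.+1 | (0 < t)%N) d t) ^+ e * y
                        | y in [set: R]])].

(* Main.v *)
Require Import Defs.
From HB Require Import structures.
From mathcomp Require Import all_boot all_order all_algebra.
From mathcomp Require Import boolp classical_sets functions cardinality.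
From mathcomp Require Import all_solvable all_field.
From mathcomp Require Import zify ring.
Set Implicit Arguments. Unset Strict Implicit. Unset Printing Implicit Defensive.
Import GRing.Theory.

Definition sincr (h : nat -> nat) := forall i j, (i < j)%N -> (h i < h j)%N.

Lemma sincrS h : (forall i, h i < h i.+1)%N -> sincr h.
Proof. by move=> H; apply: (homo_ltn ltn_trans H). Qed.

Lemma sincr_comp f g : sincr f -> sincr g -> sincr (f \o g).
Proof. by move=> Hf Hg i j /Hg /Hf. Qed.

Lemma sincr_lt f x y : sincr f -> (f x < f y)%N -> (x < y)%N.
Proof.
move=> Hf; case: (ltnP x y) => // Hyx; rewrite leq_eqVlt in Hyx.
case/orP: Hyx => [/eqP->|/Hf H]; first by rewrite ltnn.
by move=> /(ltn_trans H); rewrite ltnn.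
Qed.

Definition homog k r (c : seq nat -> 'I_r) (h : nat -> nat) (kk : 'I_r) :=
  forall s, sorted ltn s -> size s = k -> c (map h s) = kk.

Lemma pigeon_inf r (K : nat -> 'I_r) :
  exists kk, forall N0, exists n, (N0 <= n)%N /\ K n = kk.
Proof.
case: (pselect (exists kk, forall N0, exists n, (N0 <= n)%N /\ K n = kk)) => // Hno.
exfalso.
have Hb : forall kk, exists N0, forall n, (N0 <= n)%N -> K n != kk.
  move=> kk; apply: contrapT => Hc; apply: Hno; exists kk => N0.
  apply: contrapT => Hc2; apply: Hc; exists N0 => n Hn; apply/negP => /eqP Hk.
  by apply: Hc2; exists n.
have [B HB] := choice Hb.
set M := (\max_(kk : 'I_r) B kk)%N.
have := HB (K M) M; rewrite eqxx => /(_ _)/negP; apply => //.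
by rewrite /M (bigmax_sup (K M)).
Qed.

Lemma enum_inf (P : nat -> Prop) :
  (forall N0, exists n, (N0 <= n)%N /\ P n) ->
  exists rho, sincr rho /\ forall i, P (rho i).
Proof.
move=> H; have [F HF] := choice H.
pose rho := fix rho i := match i with 0 => F 0%N | i'.+1 => F (rho i').+1 end.
exists rho; split.
  by apply: sincrS => i /=; have [] := HF (rho i).+1.
by case=> [|i] /=; [have [] := HF 0%N | have [] := HF (rho i).+1].
Qed.

Lemma ramsey k r (c : seq nat -> 'I_r) :
  exists h kk, sincr h /\ homog k c h kk.
Proof.
elim: k r c => [|k IH] r c.
  exists id, (c [::]); split => // s _; case: s => //.
have ch : forall g : nat -> nat, {hk : (nat -> nat) * 'I_r | sincr hk.1 /\
   homog k (fun s => c (g 0%N :: map (g \o succn) s)) hk.1 hk.2}.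
  move=> g; apply: cid.
  have [h [kk Hh]] := IH r (fun s => c (g 0%N :: map (g \o succn) s)).
  by exists (h, kk).
pose G := fix G n := match n with 0 => id | n'.+1 => G n' \o succn \o (sval (ch (G n'))).1 end.
pose H n := (sval (ch (G n))).1.
pose K n := (sval (ch (G n))).2.
have HH n : sincr (H n) by case: (svalP (ch (G n))).
have HK n : homog k (fun s => c (G n 0%N :: map (G n \o succn) s)) (H n) (K n).
  by case: (svalP (ch (G n))).
have GS n x : G n.+1 x = G n (succn (H n x)) by [].
have sG n : sincr (G n).
  elim: n => [|n IHn] //=.
  apply: sincr_comp; last exact: HH.
  by apply: sincr_comp => // i j.
pose a n := G n 0%N.
have Gsub n d : exists psi, forall x, G (n + d.+1) x = G n (succn (H n (psi x))).
  elim: d => [|d [psi Hpsi]]; first by exists id => x; rewrite addn1.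
  exists (fun x => psi (succn (H (n + d.+1) x))) => x.
  by rewrite addnS GS Hpsi.
have aS n : (a n < a n.+1)%N by rewrite /a GS; apply: sG.
have sa : sincr a by apply: sincrS.
have col n s : sorted ltn s -> size s = k -> (forall j, j \in s -> (n < j)%N) ->
    c (a n :: map a s) = K n.
  move=> Ss Zs Hs.
  have [T HT] : {T : nat -> nat & forall m, (n < m)%N ->
      a m = G n (succn (H n (T m)))}.
    apply: (@choice _ _ (fun m t => (n < m)%N -> a m = G n (succn (H n t)))) => m.
    case: (ltnP n m) => Hnm; last by exists 0%N.
    have [psi Hpsi] := Gsub n (m - n.+1)%N.
    exists (psi 0%N) => _; rewrite /a -Hpsi; congr G; rewrite addnS -addSn subnKC //.
  have -> : map a s = map (G n \o succn) (map (H n) (map T s)).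
    rewrite -!map_comp; apply/eq_in_map => j /Hs Hj /=; exact: HT.
  apply: HK; last by rewrite !size_map.
  apply: (homo_sorted_in (P := [pred j | (n < j)%N]) (e := ltn) (e' := ltn)) => //.
  - move=> j1 j2 Hj1 Hj2 Hlt.
    have := sa _ _ Hlt; rewrite (HT _ Hj1) (HT _ Hj2).
    move=> /(sincr_lt (sG n)) /(sincr_lt (fun i j (h : (i < j)%N) => h)).
    exact: sincr_lt (HH n).
  - by apply/allP => j /Hs.
have [kk Hkk] := pigeon_inf K.
have [rho [srho Hrho]] := enum_inf Hkk.
exists (a \o rho), kk; split; first exact: sincr_comp.
case=> [|i0 s] //= Ss [Zs].
have -> : map (a \o rho) s = map a (map rho s) by rewrite map_comp.
rewrite col //.
- apply: (@homo_sorted _ _ rho ltn ltn) => //; exact: path_sorted Ss.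
- by rewrite size_map.
- move=> j /mapP [j' Hj' ->]; apply: srho.
  have := order_path_min ltn_trans Ss => /allP; exact.
Qed.


Lemma Fp_dvd p n : prime p -> ((n%:R : 'F_p) == 0)%R = (p %| n).
Proof. by move=> pp; rewrite (dvdn_pcharf (pchar_Fp pp)). Qed.

Lemma exists_lm p : prime p -> 5 <= p ->
  exists lam mu b : nat, [/\ 0 < b, p %| lam + mu, p %| mu ^ b + 1,
     1 < lam & lam.+1 < p].
Proof.
move=> pp p5.
pose P o := (0 < o) && (p %| 2 ^ o - 1).
have exP : exists o, P o.
  exists (totient p); rewrite /P totient_gt0 prime_gt0 //=.
  have cp : coprime 2 p by rewrite coprime_sym prime_coprime // gtnNdvd // (leq_trans _ p5).
  by rewrite -eqn_mod_dvd ?expn_gt0 //; apply/eqP; exact: Euler_exp_totient.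
have [o /andP [o0 Ho] Hmin] := ex_minnP exP.
have p2 : ((2%:R : 'F_p) != 0)%R by rewrite Fp_dvd // gtnNdvd // (leq_trans _ p5).
have pF : ((p%:R : 'F_p) = 0)%R by apply/eqP; rewrite Fp_dvd.
have Ho' : ((2%:R : 'F_p) ^+ o = 1)%R.
  by move: Ho; rewrite -Fp_dvd // natrB ?expn_gt0 // subr_eq0 natrX => /eqP.
case: (boolP (odd o)) => oodd.
  exists 2, (p - 2), o; split => //; last by apply: leq_trans p5.
  - by rewrite subnKC // (leq_trans _ p5).
  - rewrite -Fp_dvd // natrD natrX natrB ?(leq_trans _ p5) // pF sub0r.
    by rewrite exprNn Ho' -signr_odd oodd expr1 mulr1 addNr.
have Eo : o = (o./2).*2 by rewrite -{1}(odd_double_half o) (negbTE oodd).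
have b0 : 0 < o./2 by rewrite half_gt0; case: o o0 oodd {Ho Ho' Hmin Eo} => [|[|o]].
exists (p - 2), 2, o./2; split.
- exact: b0.
- by rewrite subnK // (leq_trans _ p5).
- have Hb : ((2%:R : 'F_p) ^+ o./2 ^+ 2 = 1)%R.
    by rewrite -exprM muln2 -Eo Ho'.
  have : ((2%:R : 'F_p) ^+ o./2 != 1)%R.
    apply/negP => /eqP H1.
    have : P o./2.
      rewrite /P -Fp_dvd // natrB ?expn_gt0 // natrX H1 subrr eqxx andbT.
      done.
    move/Hmin; rewrite leqNgt => /negP; apply.
    by rewrite [X in (_ < X)]Eo -addnn -{1}(addn0 o./2) ltn_add2l.
  move: Hb => /eqP; rewrite sqrf_eq1 => /orP [/eqP -> //|/eqP H2] _.
  by rewrite -Fp_dvd // natrD natrX H2 addNr.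
- by rewrite ltn_subRL; apply: leq_trans p5.
- clear -p5; lia.
Qed.

Section CfgS.
Local Open Scope ring_scope.


Variables (R : comPzRingType) (n p lam mu b q1 q2 : nat) (F : nat -> R).
Hypothesis hN : ((n * p * p)%N%:R : R) = 0.
Hypothesis h1 : (lam * mu ^ b + lam = p * q1)%N.
Hypothesis h2 : (lam + mu = p * q2)%N.
Hypothesis b0 : (0 < b)%N.

Definition coef j : R := ((n * p) * mu ^ j)%N%:R.
Definition Vs (f : nat -> nat) : R := \sum_(0 <= j < b + b) coef j * F (f j).
Definition Sf j := if (j <= b)%N then j else (j + b)%N.
Definition Tf j := j.+1.
Definition Uf j := if j == 0%N then 0%N else (j + b)%N.

Lemma coef_a j : lam%:R * coef j = - coef j.+1.
Proof.
apply/eqP; rewrite -subr_eq0 opprK /coef -natrM -natrD.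
have -> : (lam * (n * p * mu ^ j) + n * p * mu ^ j.+1 = (n * p * p) * (mu ^ j * q2))%N.
  have -> : (n * p * p * (mu ^ j * q2) = n * p * mu ^ j * (p * q2))%N by ring.
  by rewrite -h2 expnS; ring.
by rewrite natrM hN mul0r.
Qed.

Lemma coef_b j : lam%:R * coef (j + b) = coef j.+1.
Proof.
have H : lam%:R * coef (j + b) + lam%:R * coef j = 0.
  rewrite /coef -!natrM -natrD.
  have -> : (lam * (n * p * mu ^ (j + b)) + lam * (n * p * mu ^ j) = (n * p * p) * (mu ^ j * q1))%N.
    have -> : (n * p * p * (mu ^ j * q1) = n * p * mu ^ j * (p * q1))%N by ring.
    by rewrite -h1 expnD; ring.
  by rewrite natrM hN mul0r.
by move/eqP: H; rewrite addr_eq0 (coef_a j) opprK => /eqP.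
Qed.

Lemma big_shift_b (G : nat -> R) c : \sum_(c <= i < c + c) G i = \sum_(0 <= i < c) G (i + c).
Proof. by rewrite -{1}(add0n c) big_addn addnK. Qed.

Lemma Vs_identity : Vs Uf - Vs Sf = lam%:R * Vs Tf.
Proof.
rewrite /Vs -sumrB mulr_sumr.
rewrite (big_cat_nat (n := 1%N)) //; last by clear -b0; lia.
rewrite (big_cat_nat (m := 1%N) (n := b.+1)) //; last by clear -b0; lia.
rewrite big_nat1 /Uf /Sf /= subrr add0r.
rewrite [X in _ + X]big1_seq ?addr0; last first.
  move=> j; rewrite mem_index_iota => /andP [Hj1 Hj2].
  have Hj : (b < j)%N by move: Hj2 => /andP [].
  rewrite ifN; last by case: j Hj {Hj1 Hj2}.
  by rewrite ifN -?ltnNge // subrr.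
rewrite (big_cat_nat (m := 0%N) (n := b)) //=; last by rewrite leq_addr.
rewrite big_shift_b.
rewrite big_add1 /= -big_split /=.
apply: eq_big_nat => j /andP [_ Hj].
by rewrite Hj mulrA coef_a mulrA coef_b /Tf addSn mulNr addrC.
Qed.

Lemma coef_p j : p%:R * coef j = 0.
Proof.
rewrite /coef -natrM (_ : (p * (n * p * mu ^ j) = n * p * p * mu ^ j)%N); last by ring.
by rewrite natrM hN mul0r.
Qed.

Lemma Vs_p f : p%:R * Vs f = 0.
Proof. by rewrite /Vs mulr_sumr big1 // => j _; rewrite mulrA coef_p mul0r. Qed.



End CfgS.

Section Emb.
Local Open Scope classical_set_scope.
Lemma emb_ex (I : Type) : infinite_set [set: I] -> exists emb : nat -> I, injective emb.
Proof.
move=> /infiniteP /card_leP [f].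
have finj := @inj _ _ _ f.
exists (fun l => sval (f (exist _ l (mem_set (Logic.I : [set: nat] l))))).
move=> l1 l2 /=.
case E1: (f _) => [y1 p1]; case E2: (f _) => [y2 p2] /= Heq; subst y2.
have Hp : p1 = p2 by apply: Prop_irrelevance.
subst p2; have : f (exist _ l1 (mem_set (Logic.I : [set: nat] l1))) =
  f (exist _ l2 (mem_set (Logic.I : [set: nat] l2))) by rewrite E1 E2.
move=> /finj.
by move=> /(_ (mem_set Logic.I) (mem_set Logic.I)) [].
Qed.

End Emb.

Local Open Scope ring_scope.
Local Open Scope classical_set_scope.

Definition Aent (R : pzRingType) (lam p : nat) (i j : nat) : R :=
  match i, j with
  | O, O => 1 | O, S O => lam%:R | O, S (S O) => -1 | S O, S O => p%:R | _, _ => 0 end.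
Definition Amat (R : pzRingType) (lam p : nat) : 'M[R]_(2, 3) :=
  \matrix_(i, j) Aent R lam p i j.

Lemma cop_zero (R : comPzRingType) (d : R) (a p : nat) : (0 < a)%N -> coprime a p ->
  d * a%:R = 0 -> d * p%:R = 0 -> d = 0.
Proof.
move=> a0 cop Ha Hp; case: (egcdnP p a0) => km kn Hk _.
move: cop; rewrite /coprime => /eqP g1; rewrite g1 in Hk.
have : d * (km * a)%:R = d * (kn * p)%:R + d by rewrite Hk natrD mulrDr mulr1.
rewrite !natrM (mulrC km%:R) (mulrC kn%:R) !mulrA Ha Hp !mul0r add0r.
by move=> <-.
Qed.

Lemma natR_fun (T : Type) (M : pzRingType) k : (k%:R : T -> M) = fun _ => k%:R.
Proof. by rewrite natmulfctE. Qed.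

Lemma sq_nat n p v : prime p -> (n * p ^ 2 %| v * p)%N -> (n * p ^ 2 %| v * v)%N.
Proof.
move=> pp; rewrite expnS expn1 mulnA dvdn_pmul2r ?prime_gt0 // => Hd.
rewrite (dvdn_trans _ (dvdn_mul Hd Hd)) //.
by rewrite dvdn_mul // dvdn_mull.
Qed.

Lemma sq_zero n p (z : 'Z_(n * p ^ 2)) : (0 < n)%N -> prime p -> z * p%:R = 0 -> z * z = 0.
Proof.
move=> n0 pp.
have N1 : (1 < n * p ^ 2)%N.
  have p1 := prime_gt1 pp; rewrite expnS expn1; clear -n0 p1; nia.
rewrite -(natr_Zp z); move: (nat_of_ord z) => v.
rewrite -!natrM => Hz; apply: val_inj; rewrite /= val_Zp_nat //.
move: Hz => /(congr1 val); rewrite /= val_Zp_nat // => /eqP; rewrite -/(dvdn _ _) => H.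
by apply/eqP; rewrite -/(dvdn _ _); apply: sq_nat.
Qed.

Lemma cop_lt a p : prime p -> (0 < a)%N -> (a < p)%N -> coprime a p.
Proof. by move=> pp a0 ap; rewrite coprime_sym prime_coprime // gtnNdvd. Qed.

Lemma notGCC (n p lam : nat) (I : Type) : (0 < n)%N -> prime p -> (1 < lam)%N -> (lam.+1 < p)%N ->
  ~ gen_columns_condition (Amat (I -> 'Z_(n * p ^ 2)) lam p).
Proof.
move=> n0 pp lam1 lam2 [m [f [d [fsurj dnz H0 Hii Hiii]]]].
set R := I -> 'Z_(n * p ^ 2).
have E r : d ord0 * (\sum_(i < 3 | f i == ord0) Amat R lam p r i) = 0.
  move/matrixP: H0 => /(_ r ord0); rewrite !mxE summxE => H.
  rewrite -[RHS]H; congr (_ * _); apply: eq_bigr => i _; rewrite !mxE //.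
have E0 := E ord0; have E1 := E (lift ord0 ord0).
rewrite big_mkcond !big_ord_recl big_ord0 /= !mxE /= in E0.
rewrite big_mkcond !big_ord_recl big_ord0 /= !mxE /= in E1.
set i1 := lift ord0 ord0 in E0 E1; set i2 := lift ord0 (lift ord0 ord0) in E0 E1.
have dz a : (0 < a)%N -> (a < p)%N -> d ord0 * a%:R = 0 -> d ord0 * p%:R = 0 -> False.
  move=> a0 ap Ha Hp; move/negP: (dnz ord0); apply; apply/eqP.
  exact: (cop_zero a0 (cop_lt pp a0 ap) Ha Hp).
have lp : (lam < p)%N by apply: ltnW.
have l0 : (0 < lam)%N by apply: ltnW.
have d1 : d ord0 * 1 = 0 -> False by rewrite mulr1 => /eqP; apply/negP.
case B0: (f ord0 == ord0); case B1: (f i1 == ord0); case B2: (f i2 == ord0);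
  rewrite ?B0 ?B1 ?B2 /= ?add0r ?addr0 in E0 E1.
- by apply: (dz lam) => //; rewrite -E0; congr (_ * _); rewrite addrCA subrr addr0.
- by apply: (dz lam.+1) => //; rewrite -E0 -natr1 addrC.
- set t := f i1.
  have Ht : (0 < t)%N.
    rewrite lt0n; apply: contraFneq B1 => H; apply/eqP; apply: val_inj; exact: H.
  have [a Ha] := Hii t Ht.
  move/matrixP: Ha => /(_ (lift ord0 ord0) ord0); rewrite !mxE !summxE.
  rewrite [RHS]big1; last first.
    move=> k Hk; rewrite !mxE.
    case: k Hk => [[|[|[|k]]] Hk] //= Hf; rewrite ?mulr0 //.
    by move: Hf; rewrite (_ : Ordinal Hk = i1) ?ltnn //; apply: val_inj.
  rewrite big_mkcond !big_ord_recl big_ord0 /= !mxE /=.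
  rewrite (eqP B0) (eqP B2) eqxx (negbTE (_ : ord0 != t)); last first.
    by rewrite eq_sym -lt0n.
  rewrite /= !add0r addr0 => Hdt.
  have dtt : d t * d t = 0.
    apply/funext => x; have := congr1 (fun g => g x) Hdt.
    rewrite /= mulrfctE natR_fun => /(sq_zero n0 pp).
    by rewrite mulrfctE.
  have m0 : (0 < m)%N by apply: leq_trans Ht _; rewrite -ltnS.
  apply: (Hiii m0 2%N); apply: (sub_finite_set (B := [set 0])); last exact: finite_set1.
  move=> _ [y _ <-] /=.
  by rewrite (bigD1 t) //= exprMn expr2 dtt !mul0r mulr0 mul0r.
- by apply: d1.
- apply: (dz lam.-1) => //.
  + by rewrite -ltnS prednK.
  + by rewrite (leq_ltn_trans (leq_pred _)).
  + by rewrite -subn1 natrB.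
- by apply: (dz lam).
- by apply: d1; move/eqP: E0; rewrite mulrN oppr_eq0 => /eqP.
- have [i Hi] := fsurj ord0; move: i Hi.
  case=> [[|[|[|i]]] Hi] // Hf.
  + by move: B0; rewrite (_ : ord0 = Ordinal Hi) ?Hf ?eqxx //; apply: val_inj.
  + by move: B1; rewrite (_ : i1 = Ordinal Hi) ?Hf ?eqxx //; apply: val_inj.
  + by move: B2; rewrite (_ : i2 = Ordinal Hi) ?Hf ?eqxx //; apply: val_inj.
Qed.


Lemma Zp_gt1 n p : (0 < n)%N -> prime p -> (1 < n * p ^ 2)%N.
Proof. move=> n0 pp; have p1 := prime_gt1 pp; rewrite expnS expn1; clear -n0 p1; nia. Qed.

Lemma sortedF (f : nat -> nat) K : (forall i j, (i < j)%N -> (f i < f j)%N) ->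
  sorted ltn (map f (iota 0 K)).
Proof. by move=> Hf; apply: (@homo_sorted _ _ f ltn ltn) => //; exact: iota_ltn_sorted. Qed.

Lemma PR_part (n p lam mu b q1 q2 : nat) (I : Type) : (0 < n)%N -> prime p -> (0 < b)%N ->
  (lam * mu ^ b + lam = p * q1)%N -> (lam + mu = p * q2)%N -> infinite_set [set: I] ->
  partition_regular (Amat (I -> 'Z_(n * p ^ 2)) lam p).
Proof.
move=> n0 pp b0 h1 h2 Iinf r r1 chi.
set R := I -> 'Z_(n * p ^ 2).
have N1 := Zp_gt1 n0 pp.
have hN : ((n * p * p)%N%:R : R) = 0.
  by rewrite natR_fun; apply/funext => i /=; rewrite -mulnA mulnn pchar_Zp.
have [emb emb_inj] := emb_ex Iinf.
pose E l : R := fun i => if `[< i = emb l >] then 1 else 0.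
pose c (s : seq nat) := chi (\sum_(j < size s) coef R n p mu j * E (nth 0%N s j)).
have [h [kk [sh Hh]]] := ramsey (b + b) c.
pose F a := E (h a).
have Vk f : (forall i j, (i < j)%N -> (f i < f j)%N) -> chi (Vs n p mu b F f) = kk.
  move=> Hf; rewrite -(Hh (map f (iota 0 (b + b)))) ?sortedF ?size_map ?size_iota //.
  rewrite /c /Vs !size_map size_iota big_mkord; congr chi; apply: eq_bigr => j _.
  by rewrite (nth_map 0%N) ?size_map ?size_iota // (nth_map 0%N) ?size_iota // nth_iota.
have Sk : chi (Vs n p mu b F (Sf b)) = kk.
  by apply: Vk => i j Hij; rewrite /Sf; case: ifP; case: ifP => *; lia.
have Tk : chi (Vs n p mu b F Tf) = kk by apply: Vk.
have Uk : chi (Vs n p mu b F (Uf b)) = kk.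
  by apply: Vk => i j Hij; rewrite /Uf; case: eqP; case: eqP => *; lia.
pose X : 'cV[R]_3 := \col_(i < 3) nth 0 [:: Vs n p mu b F (Sf b); Vs n p mu b F Tf;
   Vs n p mu b F (Uf b)] i.
exists X; split.
- apply/eqP => /matrixP /(_ ord0 ord0); rewrite !mxE /= => Hx.
  have := congr1 (fun g => g (emb (h 0%N))) Hx; rewrite /Vs fct_sumE /=.
  rewrite big_ltn ?addn_gt0 ?b0 //.
  rewrite big1_seq ?addr0; last first.
    move=> j; rewrite mem_index_iota => /andP [_ /andP [Hj _]].
    rewrite mulrfctE /F /E asboolF ?mulr0 // => /emb_inj /eqP.
    rewrite eq_sym; apply/negP; rewrite neq_ltn; apply/orP; right; apply: sh.
    by rewrite /Sf; case: ifP => _; lia.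
  rewrite mulrfctE /F /E asboolT // mulr1 /coef natR_fun expn0 muln1.
  move/(congr1 val); rewrite /= val_Zp_nat // modn_small; last first.
    rewrite expnS expn1 mulnA ltn_Pmulr ?prime_gt1 //.
    by rewrite muln_gt0 n0 prime_gt0.
  by move=> H; have := muln_gt0 n p; rewrite H n0 (prime_gt0 pp).
- apply/matrixP => i j; rewrite !mxE !big_ord_recl big_ord0 !mxE /=.
  case: i => [[|[|i]] Hi] /=.
  + rewrite mul1r mulN1r addr0 -(Vs_identity F hN h1 h2 b0).
    by rewrite addrCA addrA subrK subrr.
  + by rewrite !mul0r (Vs_p mu b F hN) !add0r.
  + by rewrite !mul0r !add0r.
- suff Hk : forall i : 'I_3, chi (X i 0) = kk by move=> i j; rewrite !Hk.
  by case=> [[|[|[|i]]] Hi]; rewrite !mxE.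
Qed.

Unset Implicit Arguments.
Set Strict Implicit.

Theorem corollary4p8 (n p : nat) (I : Type) :
  (0 < n)%N -> prime p -> (5 <= p)%N -> infinite_set [set: I] ->
  exists A : 'M[I -> 'Z_(n * p ^ 2)]_(2, 3),
    partition_regular A /\ ~ gen_columns_condition A.
Proof.
move=> n0 pp p5 Iinf.
have [lam [mu [b [b0 hlm hmb lam1 lam2]]]] := exists_lm pp p5.
have [q2 Hq2] : exists q2, (lam + mu = p * q2)%N.
  by move/dvdnP: hlm => [k ->]; exists k; rewrite mulnC.
have [q1 Hq1] : exists q1, (lam * mu ^ b + lam = p * q1)%N.
  move/dvdnP: hmb => [k Hk]; exists (lam * k)%N.
  by rewrite -{2}(muln1 lam) -mulnDr Hk mulnA mulnC.
exists (Amat _ lam p); split.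
- exact: PR_part n0 pp b0 Hq1 Hq2 Iinf.
- exact: notGCC.
Qed.
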